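(* Let $f\in\mathbb{R}[x,y]$ be a polynomial of degree $n\ge 3$ with homogeneous decomposition $f=\sum_{i=0}^n f_i$. If $f_n$ is hyperbolic or elliptic, then the Hessian curve $\{(x,y)\in\mathbb{R}^2:\mathrm{Hess}\,f(x,y)=0\}$ is compact. Moreover, the set $b^-\cap\mathbb{R}^2$ is hyperbolic (i.e. $\mathrm{Hess}\,f<0$ at each of its points) if $f_n$ is hyperbolic, and elliptic (i.e. $\mathrm{Hess}\,f>0$ at each of its points) if $f_n$ is elliptic.
   Context: $f_i$ denotes the homogeneous part of degree $i$ of $f$. $\mathrm{Hess}\,g=g_{xx}g_{yy}-g_{xy}^2$. A homogeneous polynomial $g\in\mathbb{R}[x,y]$ is hyperbolic (resp. elliptic) if $\mathrm{Hess}\,g$ has no real linear factors and is $\le 0$ (resp. $\ge 0$) everywhere on $\mathbb{R}^2$. Let $H_f\in\mathbb{R}[x,y,z]$ be the homogenization of $\mathrm{Hess}\,f$, i.e. $H_f(x,y,z)=z^{2n-4}\,\mathrm{Hess}\,f(x/z,y/z)$, a homogeneous polynomial of even degree $2n-4$ with $H_f(x,y,0)=\mathrm{Hess}\,f_n(x,y)$; its zero set in $\mathbb{RP}^2$ is the projective Hessian curve of $f$, and $\mathbb{R}^2$ is identified with $\{z\neq 0\}\subset\mathbb{RP}^2$ via $(x,y)\mapsto[x:y:1]$. The complement in $\mathbb{RP}^2$ of the projective Hessian curve is the disjoint union of two open sets $b^+$ and $b^-$, on each of which $H_f$ has constant sign, the two signs being opposite, where $b^+$ is orientable and $b^-$ is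 nonorientable. *)

(* Defs.v *)
From HB Require Import structures.
From mathcomp Require Import all_boot all_order all_algebra.
From mathcomp Require Import mpoly.
From mathcomp Require Import all_classical all_reals all_analysis.
Set Implicit Arguments. Unset Strict Implicit. Unset Printing Implicit Defensive.
Import Order.TTheory GRing.Theory Num.Theory.
Import numFieldNormedType.Exports.
Local Open Scope classical_set_scope.
Local Open Scope ring_scope.

Section Defs.
Variable R : realType.

(* real polynomials in two variables x = 'X_0, y = 'X_1 *)
Definition poly2 := {mpoly R[2]}.

Definition vx : 'I_2 := @Ordinal 2 0 isT.
Definition vy : 'I_2 := @Ordinal 2 1 isT.

Definition ev2 (g : poly2) (a b : R) : R :=
  meval (fun i : 'I_2 => if val i == 0%N then a else b) g.

(* msize2 g = 1 + total degree of g (0 if g = 0) *)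
Definition msize2 (g : poly2) : nat := msize g.

Definition deg2 (g : poly2) : nat := (msize2 g).-1.

Definition hpart (g : poly2) (i : nat) : poly2 :=
  \sum_(m <- msupp g | mdeg m == i) mcoeff m g *: mpolyX R m.

Definition Hess (g : poly2) : poly2 :=
  mderiv vx (mderiv vx g) * mderiv vy (mderiv vy g)
  - (mderiv vx (mderiv vy g)) ^+ 2.

Definition has_real_linear_factor (h : poly2) : Prop :=
  exists l q : poly2, msize2 l = 2%N /\ h = l * q.

Definition hyperbolic (g : poly2) : Prop :=
  ~ has_real_linear_factor (Hess g) /\ forall a b : R, ev2 (Hess g) a b <= 0.

Definition elliptic (g : poly2) : Prop :=
  ~ has_real_linear_factor (Hess g) /\ forall a b : R, 0 <= ev2 (Hess g) a b.

(* H_f(x,y,z) = z^(2n-4) Hess f (x/z, y/z), extended by Hess f_n(x,y) at z = 0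
   (this is the polynomial function of the homogenization of Hess f). *)
Definition Hf (f : poly2) (v : R * R * R) : R :=
  let: (a, b, c) := v in
  let n := deg2 f in
  if c != 0 then c ^+ (2 * n - 4) * ev2 (Hess f) (a / c) (b / c)
  else ev2 (Hess (hpart f n)) a b.

(* A set U of nonzero vectors of R^3 invariant under nonzero scaling represents a
   subset of RP^2.  Such an (open) subset of RP^2 is nonorientable iff it contains
   an orientation-reversing loop, i.e. a loop whose lift to S^2 (equivalently to
   R^3 \ 0) joins a vector v to its antipode -v. *)
Definition nonorientable (U : set (R * R * R)) : Prop :=
  exists g : R -> R * R * R,
    {within `[0, 1], continuous g} /\
    (forall t, 0 <= t <= 1 -> U (g t)) /\
    (g 1).1.1 = - (g 0).1.1 /\ (g 1).1.2 = - (g 0).1.2 /\ (g 1).2 = - (g 0).2.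

Definition orientable (U : set (R * R * R)) : Prop := ~ nonorientable U.

(* The complement of the projective Hessian curve is {s H_f > 0} U {-s H_f > 0}
   for s = +-1; b^- is the nonorientable one and b^+ the orientable one. *)
Definition bminus_sign (f : poly2) (s : R) : Prop :=
  (s = 1 \/ s = -1) /\
  nonorientable [set v | 0 < s * Hf f v] /\
  orientable [set v | 0 < - s * Hf f v].

Definition bminus (f : poly2) : set (R * R * R) :=
  [set v | exists s, bminus_sign f s /\ 0 < s * Hf f v].

Definition hessian_curve (f : poly2) : set (R * R) :=
  [set p | ev2 (Hess f) p.1 p.2 = 0].

End Defs.

(* Main.v *)
Require Import Defs.
From HB Require Import structures.
From mathcomp Require Import all_boot all_order all_algebra.
From mathcomp Require Import mpoly.
From mathcomp Require Import all_classical all_reals all_analysis.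
Import Order.TTheory GRing.Theory Num.Theory.
Import numFieldNormedType.Exports.
Local Open Scope classical_set_scope.
Local Open Scope ring_scope.
From mathcomp Require Import ring lra zify.

Section Alg.
Context {R : realType}.
Implicit Types (p q : {mpoly R[2]}).

Definition hom (d : nat) p := forall m, m \in msupp p -> mdeg m = d.
Definition low (d : nat) p := forall m, m \in msupp p -> (mdeg m <= d)%N.

Lemma hom_low d p : hom d p -> low d p.
Proof. by move=> h m /h ->. Qed.

Lemma low_mono d e p : (d <= e)%N -> low d p -> low e p.
Proof. by move=> de h m /h /leq_trans; apply. Qed.

Lemma hom_add d p q : hom d p -> hom d q -> hom d (p + q).
Proof. by move=> hp hq m /msuppD_le; rewrite mem_cat => /orP[/hp|/hq]. Qed.

Lemma low_add d p q : low d p -> low d q -> low d (p + q).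
Proof. by move=> hp hq m /msuppD_le; rewrite mem_cat => /orP[/hp|/hq]. Qed.

Lemma hom_opp d p : hom d p -> hom d (- p).
Proof. by move=> hp m; rewrite (perm_mem (msuppN p)) => /hp. Qed.

Lemma low_opp d p : low d p -> low d (- p).
Proof. by move=> hp m; rewrite (perm_mem (msuppN p)) => /hp. Qed.

Lemma hom_mul d e p q : hom d p -> hom e q -> hom (d + e) (p * q).
Proof.
move=> hp hq m /msuppM_le/allpairsP [[m1 m2] /= [/hp h1 /hq h2 ->]].
by rewrite mdegD h1 h2.
Qed.

Lemma low_mul d e p q : low d p -> low e q -> low (d + e) (p * q).
Proof.
move=> hp hq m /msuppM_le/allpairsP [[m1 m2] /= [/hp h1 /hq h2 ->]].
by rewrite mdegD leq_add.
Qed.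

Lemma supp_deriv i p m : m \in msupp (mderiv i p) -> (m + U_(i))%MM \in msupp p.
Proof.
rewrite -[_ \in msupp (mderiv _ _)]negbK -[_ \in msupp p]negbK -!mcoeff_eq0.
rewrite mcoeff_mderiv; apply: contra => /eqP ->.
by rewrite mul0rn.
Qed.

Lemma hom_deriv d i p : hom d p -> hom d.-1 (mderiv i p).
Proof.
move=> hp m /supp_deriv /hp; rewrite mdegD mdeg1 => <-.
by rewrite addn1.
Qed.

Lemma low_deriv d i p : low d p -> low d.-1 (mderiv i p).
Proof.
move=> hp m /supp_deriv /hp; rewrite mdegD mdeg1 addn1.
by case: d {hp}.
Qed.

Lemma hom_hpart f d : hom d (hpart f d).
Proof.
move=> m /msupp_sum_le /flattenP [s /mapP [k]].
rewrite mem_filter => /andP [/eqP hk _] -> /msuppZ_le.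
by rewrite msuppX inE => /eqP ->.
Qed.

Lemma low_rest f n : msize f = n.+1 -> low n.-1 (f - hpart f n).
Proof.
move=> hs.
have -> : f - hpart f n =
  \sum_(k <- msupp f | mdeg k != n) f@_k *: 'X_[k].
  rewrite {1}[f]mpolyE (bigID (fun k => mdeg k == n)) /=.
  by rewrite /hpart addrC addrK.
move=> m /msupp_sum_le /flattenP [s /mapP [k]].
rewrite mem_filter => /andP [hk kin] -> /msuppZ_le.
rewrite msuppX inE => /eqP ->.
have := msize_mdeg_lt kin; rewrite hs ltnS.
by rewrite leq_eqVlt (negbTE hk) /=; case: n {hs hk}.
Qed.


Lemma hom_eq d e p : d = e -> hom d p -> hom e p.
Proof. by move=> ->. Qed.
Lemma low_eq d e p : (d <= e)%N -> low d p -> low e p.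
Proof. exact: low_mono. Qed.

Lemma hom_Hess g n : (2 <= n)%N -> hom n g -> hom (2 * n - 4) (Hess g).
Proof.
move=> n2 hg; rewrite /Hess.
have h1 i j : hom n.-1.-1 (mderiv i (mderiv j g)) by do 2 apply: hom_deriv.
apply: hom_add; last apply: hom_opp; rewrite ?expr2;
  (apply: hom_eq; last by apply: hom_mul; apply: h1); lia.
Qed.

Definition Eterm (fn g : {mpoly R[2]}) :=
  mderiv vx (mderiv vx fn) * mderiv vy (mderiv vy g)
  + mderiv vx (mderiv vx g) * mderiv vy (mderiv vy fn)
  + mderiv vx (mderiv vx g) * mderiv vy (mderiv vy g)
  - (mderiv vx (mderiv vy fn) * mderiv vx (mderiv vy g)
     + mderiv vx (mderiv vy fn) * mderiv vx (mderiv vy g))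
  - mderiv vx (mderiv vy g) * mderiv vx (mderiv vy g).

Lemma Hess_split fn g : Hess (fn + g) = Hess fn + Eterm fn g.
Proof. rewrite /Hess /Eterm !mderivD. ring. Qed.

Lemma low_Eterm fn g n : (3 <= n)%N -> hom n fn -> low n.-1 g ->
  low (2 * n - 5) (Eterm fn g).
Proof.
move=> n3 hf hg.
have F i j : low n.-2 (mderiv i (mderiv j fn)).
  by apply: hom_low; do 2 apply: hom_deriv.
have G i j : low n.-1.-2 (mderiv i (mderiv j g)) by do 2 apply: low_deriv.
rewrite /Eterm; repeat apply: low_add; try apply: low_opp; try apply: low_add;
  (apply: low_eq; last by apply: low_mul; first [apply: F | apply: G]; first [apply: F | apply: G]); lia.
Qed.


Lemma meval_hom d p (v : 'I_2 -> R) t :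
  hom d p -> meval (fun k => t * v k) p = t ^+ d * meval v p.
Proof.
move=> hp; rewrite !mevalE mulr_sumr big_seq [RHS]big_seq.
apply: eq_bigr => m /hp hm.
under eq_bigr do rewrite exprMn.
by rewrite big_split /= prodrXr -mdegE hm mulrCA.
Qed.

Lemma meval_bound d p (v : 'I_2 -> R) N :
  low d p -> 1 <= N -> (forall k, `|v k| <= N) ->
  `|meval v p| <= (\sum_(m <- msupp p) `|p@_m|) * N ^+ d.
Proof.
move=> hp N1 hv; rewrite mevalE mulr_suml.
apply: le_trans (ler_norm_sum _ _ _) _.
rewrite big_seq [X in _ <= X]big_seq; apply: ler_sum => m /hp hm.
rewrite normrM ler_wpM2l //.
rewrite normr_prod.
apply: (@le_trans _ _ (\prod_(i < 2) N ^+ m i)).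
  apply: ler_prod => i _; rewrite normr_ge0 /= normrX.
  apply: (lerXn2r (m i)); rewrite ?nnegrE ?normr_ge0 ?hv //.
  exact: le_trans ler01 N1.
by rewrite -expr_sum -mdegE; apply: ler_weXn2l.
Qed.


Lemma poly_all_roots (u : {poly R}) : (forall x, u.[x] = 0) -> u = 0.
Proof.
move=> hu; apply/eqP; apply: contraT => nz.
have := max_poly_roots nz (rs := [seq k%:R | k <- iota 0 (size u)]).
rewrite size_map size_iota ltnn; apply.
  by apply/allP => x _; apply/rootP.
rewrite map_inj_uniq ?iota_uniq // => x y /eqP.
by rewrite eqr_nat => /eqP.
Qed.

Section Factor.
Variables (i j : 'I_2).
Hypothesis hX : forall m : 'X_{1..2}, ('X_[m] : {mpoly R[2]}) = 'X_i ^+ m i * 'X_j ^+ m j.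
Hypothesis hij : i != j.

Definition Phi (u : {poly R}) : {mpoly R[2]} :=
  (map_poly (mpolyC 2 (R:=R)) u).['X_i].

Lemma PhiD u w : Phi (u + w) = Phi u + Phi w.
Proof. by rewrite /Phi rmorphD hornerD. Qed.

Lemma Phi0 : Phi 0 = 0.
Proof. by rewrite /Phi rmorph0 horner0. Qed.

Lemma PhiZX c e : Phi (c%:P * 'X^e) = c *: 'X_i ^+ e.
Proof.
by rewrite /Phi rmorphM /= map_polyC map_polyXn hornerCM hornerXn mul_mpolyC.
Qed.

Lemma meval_Phi v u : meval v (Phi u) = u.[v i].
Proof.
elim/poly_ind: u => [|u c IH]; first by rewrite Phi0 meval0 horner0.
rewrite /Phi rmorphD rmorphM /= map_polyX map_polyC /= !hornerMXaddC.
by rewrite mevalD mevalM mevalXU mevalC -IH.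
Qed.

Lemma div_exists t0 p : exists r u, p = ('X_j - t0 *: 'X_i) * r + Phi u.
Proof.
rewrite [p]mpolyE; elim: (msupp p) => [|m s [r [u IH]]].
  by exists 0, 0; rewrite big_nil mulr0 Phi0 addr0.
rewrite big_cons IH hX.
set a := m i; set b := m j.
have hb : 'X_j ^+ b = ('X_j - t0 *: 'X_i) * \sum_(k < b) 'X_j ^+ (b.-1 - k) * (t0 *: 'X_i) ^+ k
   + (t0 *: 'X_i) ^+ b.
  by rewrite -subrXX subrK.
exists (p@_m *: ('X_i ^+ a * \sum_(k < b) 'X_j ^+ (b.-1 - k) * (t0 *: 'X_i) ^+ k) + r).
exists (((p@_m * t0 ^+ b)%:P * 'X^(a + b)) + u).
rewrite PhiD PhiZX hb exprZn -scalerA exprD.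
rewrite -!mul_mpolyC; ring.
Qed.

Lemma msize_l t0 : msize ('X_j - t0 *: 'X_i : {mpoly R[2]}) = 2%N.
Proof.
apply/eqP; rewrite eqn_leq; apply/andP; split.
  apply: leq_trans (msizeD_le _ _) _; rewrite msizeN geq_max.
  by rewrite (leq_trans (msizeZ_le _ _)) msizeX mdeg1.
have : U_(j)%MM \in msupp ('X_j - t0 *: 'X_i : {mpoly R[2]}).
  rewrite -[_ \in _]negbK -mcoeff_eq0 mcoeffB mcoeffZ !mcoeffXU eqxx.
  rewrite eq_sym (negbTE hij) mulr0 subr0 eq_sym; exact: oner_neq0.
by move/msize_mdeg_lt; rewrite mdeg1.
Qed.

Lemma factor_gen (v0 : 'I_2 -> R) q d : hom d q -> v0 i != 0 -> meval v0 q = 0 ->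
  has_real_linear_factor q.
Proof.
move=> hq ni hz.
set t0 := v0 j / v0 i.
have [r [u E]] := div_exists t0 q.
have u0 : u = 0.
  apply: poly_all_roots => x.
  pose w := fun k => (x / v0 i) * v0 k.
  have : meval w q = 0 by rewrite /w (meval_hom _ _ _ _ hq) hz mulr0.
  rewrite E mevalD mevalM mevalB mevalZ !mevalXU meval_Phi /w /t0.
  have -> : x / v0 i * v0 j - v0 j / v0 i * (x / v0 i * v0 i) = 0.
    by field.
  by rewrite mul0r add0r divfK.
exists ('X_j - t0 *: 'X_i), r; split; first exact: msize_l.
by rewrite E u0 Phi0 addr0.
Qed.

End Factor.

Lemma hX1 (m : 'X_{1..2}) : ('X_[m] : {mpoly R[2]}) = 'X_vx ^+ m vx * 'X_vy ^+ m vy.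
Proof.
rewrite mpolyXE_id !big_ord_recl big_ord0 mulr1.
have -> : (ord0 : 'I_2) = vx by apply: val_inj.
by have -> : (lift vx ord0 : 'I_2) = vy by apply: val_inj.
Qed.

Lemma hX2 (m : 'X_{1..2}) : ('X_[m] : {mpoly R[2]}) = 'X_vy ^+ m vy * 'X_vx ^+ m vx.
Proof. by rewrite hX1 mulrC. Qed.

Lemma nz_of_nofactor q d a b : hom d q -> ~ has_real_linear_factor q ->
  (a != 0) || (b != 0) -> ev2 q a b != 0.
Proof.
move=> hq nf ab; apply/negP => /eqP hz; apply: nf.
case: (boolP (a != 0)) ab => [na _ | /negPn a0 /= nb].
  by apply: (@factor_gen vx vy hX1 isT (fun k : 'I_2 => if val k == 0%N then a else b) q d hq).
by apply: (@factor_gen vy vx hX2 isT (fun k : 'I_2 => if val k == 0%N then a else b) q d hq).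
Qed.


Lemma path_nonor (U : set (R * R * R)) :
  (forall a b : R, a ^+ 2 + b ^+ 2 = 1 -> U (a, b, 0)) -> nonorientable U.
Proof.
move=> hU.
exists (fun t : R => (cos (pi * t), sin (pi * t), (0 : R))).
split.
  apply: continuous_subspaceT => x.
  have hm : {for x, continuous (fun t : R => pi * t)}.
    by apply: continuousM; [exact: cvg_cst | exact: cvg_id].
  have h1 := continuous_comp hm (@continuous_cos R _).
  have h2 := continuous_comp hm (@continuous_sin R _).
  have h3 : {for x, continuous (fun t : R => (cos (pi * t), sin (pi * t)))}.
    by have := cvg_pair h1 h2; exact.
  have h4 : {for x, continuous (fun _ : R => (0 : R))} by exact: cvg_cst.
  by have := cvg_pair h3 h4; exact.
split.
  by move=> t _; apply: hU; rewrite cos2Dsin2.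
by rewrite /= !mulr1 !mulr0 cospi sinpi cos0 sin0 oppr0.
Qed.


Lemma cont_sum {T : topologicalType} (I : Type) (s : seq I) (F : I -> T -> R) :
  (forall i, continuous (F i)) -> continuous (fun t => \sum_(i <- s) F i t).
Proof.
move=> hF; elim: s => [|a s IH].
  have -> : (fun t => \sum_(i <- [::]) F i t) = (fun _ => 0).
    by apply: funext => t; rewrite big_nil.
  by move=> x; exact: cvg_cst.
have -> : (fun t => \sum_(i <- a :: s) F i t) = (fun t => F a t + \sum_(i <- s) F i t).
  by apply: funext => t; rewrite big_cons.
by move=> x; exact: (continuousD (hF a x) (IH x)).
Qed.

Lemma cont_mul {T : topologicalType} (f g : T -> R) :
  continuous f -> continuous g -> continuous (fun t => f t * g t).
Proof. by move=> hf hg x; exact: (continuousM (hf x) (hg x)). Qed.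

Lemma cont_exp {T : topologicalType} (f : T -> R) k :
  continuous f -> continuous (fun t => f t ^+ k).
Proof.
move=> hf; elim: k => [|k IH].
  have -> : (fun t => f t ^+ 0) = (fun _ => 1) by apply: funext => t; rewrite expr0.
  by move=> x; exact: cvg_cst.
have -> : (fun t => f t ^+ k.+1) = (fun t => f t * f t ^+ k).
  by apply: funext => t; rewrite exprS.
exact: cont_mul.
Qed.

Lemma meval_cont {T : topologicalType} (w : T -> 'I_2 -> R) p :
  (forall k, continuous (fun t => w t k)) -> continuous (fun t => meval (w t) p).
Proof.
move=> hw.
have -> : (fun t => meval (w t) p) =
   (fun t => \sum_(m <- msupp p) (p@_m * ((w t vx) ^+ m vx * (w t vy) ^+ m vy))).
  apply: funext => t; rewrite mevalE; apply: eq_bigr => m _.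
  rewrite !big_ord_recl big_ord0 mulr1.
  have -> : (ord0 : 'I_2) = vx by apply: val_inj.
  by have -> : (lift vx ord0 : 'I_2) = vy by apply: val_inj.
apply: cont_sum => m; apply: cont_mul; first by move=> x; exact: cvg_cst.
by apply: cont_mul; apply: cont_exp.
Qed.

Lemma ev2_cont2 p : continuous (fun t : R * R => ev2 p t.1 t.2).
Proof.
apply: (meval_cont (fun t k => if val k == 0%N then t.1 else t.2) p).
move=> k; case: (val k == 0%N).
  by move=> x; exact: cvg_fst.
by move=> x; exact: cvg_snd.
Qed.

Lemma ev2_cont1 p (c : R) : continuous (fun t : R => ev2 p c t).
Proof.
apply: (meval_cont (fun t k => if val k == 0%N then c else t) p).
move=> k; case: (val k == 0%N).
  by move=> x; exact: cvg_cst.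
by move=> x; exact: cvg_id.
Qed.

Lemma ev2_cont1' p (c : R) : continuous (fun t : R => ev2 p t c).
Proof.
apply: (meval_cont (fun t k => if val k == 0%N then t else c) p).
move=> k; case: (val k == 0%N).
  by move=> x; exact: cvg_id.
by move=> x; exact: cvg_cst.
Qed.


Lemma ev2_scale q d (a c : R) : hom d q -> a != 0 ->
  ev2 q a (a * c) = a ^+ d * ev2 q 1 c.
Proof.
move=> hq na; rewrite /ev2 -(meval_hom _ _ _ _ hq); apply: meval_eq => k /=.
by case: (val k == 0%N); rewrite ?mulr1.
Qed.

Lemma ev2_scale' q d (a c : R) : hom d q -> a != 0 ->
  ev2 q (a * c) a = a ^+ d * ev2 q c 1.
Proof.
move=> hq na; rewrite /ev2 -(meval_hom _ _ _ _ hq); apply: meval_eq => k /=.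
by case: (val k == 0%N); rewrite ?mulr1.
Qed.

Lemma lower_bound q d : (0 < d)%N -> hom d q ->
  (forall a b, (a != 0) || (b != 0) -> ev2 q a b != 0) ->
  exists2 eps, 0 < eps &
   (forall a b, `|b| <= `|a| -> eps * `|a| ^+ d <= `|ev2 q a b|) /\
   (forall a b, `|a| <= `|b| -> eps * `|b| ^+ d <= `|ev2 q a b|).
Proof.
move=> d0 hq nz.
have m11 : (-1 : R) <= 1 by lra.
have c1 : continuous (fun t => `|ev2 q 1 t|).
  by move=> x; exact: (continuous_comp (ev2_cont1 q 1 x) (@norm_continuous _ R^o _)).
have c2 : continuous (fun t => `|ev2 q t 1|).
  by move=> x; exact: (continuous_comp (ev2_cont1' q 1 x) (@norm_continuous _ R^o _)).
have [t1 t1in h1] := EVT_min m11 (continuous_subspaceT c1).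
have [t2 t2in h2] := EVT_min m11 (continuous_subspaceT c2).
have p1 : 0 < `|ev2 q 1 t1| by rewrite normr_gt0 nz ?oner_neq0.
have p2 : 0 < `|ev2 q t2 1| by rewrite normr_gt0 nz ?oner_neq0 ?orbT.
exists (Num.min `|ev2 q 1 t1| `|ev2 q t2 1|); first by rewrite lt_min p1 p2.
split=> a b hab.
  case: (eqVneq a 0) => [-> | na].
    by rewrite normr0 expr0n -(prednK d0) /= mulr0.
  have -> : b = a * (b / a) by rewrite mulrC divfK.
  rewrite (ev2_scale _ _ _ _ hq na) normrM normrX mulrC ler_wpM2l ?exprn_ge0 //.
  rewrite ge_min; apply/orP; left; apply: h1.
  rewrite in_itv /= -ler_norml normrM normrV ?unitfE // ler_pdivrMr ?normr_gt0 //.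
  by rewrite mul1r.
case: (eqVneq b 0) => [-> | na].
  by rewrite normr0 expr0n -(prednK d0) /= mulr0.
have -> : a = b * (a / b) by rewrite mulrC divfK.
rewrite (ev2_scale' _ _ _ _ hq na) normrM normrX mulrC ler_wpM2l ?exprn_ge0 //.
rewrite ge_min; apply/orP; right; apply: h2.
rewrite in_itv /= -ler_norml normrM normrV ?unitfE // ler_pdivrMr ?normr_gt0 //.
by rewrite mul1r.
Qed.


Lemma growth_aux (h e N eps C : R) k : 0 < eps -> 0 <= C -> 1 + C / eps < N ->
  eps * N ^+ k.+1 <= `|h| -> `|e| <= C * N ^+ k -> h + e != 0.
Proof.
move=> ep C0 hN hh he.
have N0 : 0 < N.
  have : 0 <= C / eps by apply: divr_ge0 => //; apply: ltW.
  lra.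
have Nk : 0 < N ^+ k by rewrite exprn_gt0.
have hC : C < (N - 1) * eps.
  have h' : C / eps < N - 1 by lra.
  by rewrite -ltr_pdivrMr.
have : C * N ^+ k < eps * N ^+ k.+1.
  rewrite exprS mulrCA mulrA ltr_pM2r //; nra.
move=> lt; apply/eqP => he0.
have hE : h = - e by apply/eqP; rewrite -addr_eq0 he0.
move: hh; rewrite hE normrN; lra.
Qed.

End Alg.

Theorem theorem2 (R : realType) (f : poly2 R) (n : nat) :
  (3 <= n)%N -> msize2 f = n.+1 ->
  hyperbolic (hpart f n) \/ elliptic (hpart f n) ->
  compact (hessian_curve f) /\
  (hyperbolic (hpart f n) ->
     forall a b : R, bminus f (a, b, 1) -> ev2 (Hess f) a b < 0) /\
  (elliptic (hpart f n) ->
     forall a b : R, bminus f (a, b, 1) -> 0 < ev2 (Hess f) a b).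
Proof.
move=> n3 hs hyp.
set fn := hpart f n.
set g := f - fn.
have hfn : hom n fn := hom_hpart f n.
have hg : low n.-1 g := low_rest _ _ hs.
have hH : hom (2 * n - 4) (Hess fn) by apply: hom_Hess => //; lia.
have nofac : ~ has_real_linear_factor (Hess fn) by case: hyp => [[]|[]].
have nz : forall a b, (a != 0) || (b != 0) -> ev2 (Hess fn) a b != 0.
  by move=> a b; apply: nz_of_nofactor hH nofac.
have split_ev : forall a b, ev2 (Hess f) a b = ev2 (Hess fn) a b + ev2 (Eterm fn g) a b.
  move=> a b; have -> : f = fn + g by rewrite /g addrC subrK.
  by rewrite Hess_split /ev2 mevalD.
have hE : low (2 * n - 5) (Eterm fn g) by apply: low_Eterm.
have hd0 : (0 < 2 * n - 4)%N by lia.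
have Hf0 : forall a b, Hf f (a, b, 0) = ev2 (Hess fn) a b.
  by move=> a b; rewrite /Hf /= eqxx /= /deg2 hs.
have Hf1 : forall a b, Hf f (a, b, 1) = ev2 (Hess f) a b.
  by move=> a b; rewrite /Hf /= oner_eq0 /= expr1n mul1r !divr1.
have circ : forall a b : R, a ^+ 2 + b ^+ 2 = 1 -> (a != 0) || (b != 0).
  move=> a b h; apply: contraT; rewrite negb_or !negbK => /andP [/eqP a0 /eqP b0].
  by move: h; rewrite a0 b0 expr0n /= addr0 => /eqP; rewrite eq_sym oner_eq0.
split; last split.
- have [eps ep [L1 L2]] := lower_bound _ _ hd0 hH nz.
  set C := \sum_(m <- msupp (Eterm fn g)) `|(Eterm fn g)@_m|.
  have C0 : 0 <= C by apply: sumr_ge0 => m _.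
  set M := 1 + C / eps.
  have M1 : 1 <= M.
    have : 0 <= C / eps by apply: divr_ge0 => //; apply: ltW.
    rewrite /M; lra.
  have hd : (2 * n - 4 = (2 * n - 5).+1)%N by lia.
  have key : forall a b, `|b| <= `|a| -> M < `|a| -> ev2 (Hess f) a b != 0.
    move=> a b hab hM; rewrite split_ev.
    apply: (@growth_aux R _ _ `|a| eps C (2 * n - 5)%N ep C0 hM).
      by rewrite -hd; apply: L1.
    apply: meval_bound => //; first by apply: le_trans M1 (ltW hM).
    by move=> k /=; case: (val k == 0%N).
  have key' : forall a b, `|a| <= `|b| -> M < `|b| -> ev2 (Hess f) a b != 0.
    move=> a b hab hM; rewrite split_ev.
    apply: (@growth_aux R _ _ `|b| eps C (2 * n - 5)%N ep C0 hM).
      by rewrite -hd; apply: L2.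
    apply: meval_bound => //; first by apply: le_trans M1 (ltW hM).
    by move=> k /=; case: (val k == 0%N).
  have bnd : forall a b, ev2 (Hess f) a b = 0 -> `|a| <= M /\ `|b| <= M.
    move=> a b hz.
    case: (leP `|b| `|a|) => hab.
      case: (leP `|a| M) => hM; last by move: (key a b hab hM); rewrite hz eqxx.
      by split=> //; apply: le_trans hab hM.
    case: (leP `|b| M) => hM; last by move: (key' a b (ltW hab) hM); rewrite hz eqxx.
    by split=> //; apply: le_trans (ltW hab) hM.
  have hc := compact_setX (@segment_compact R (- M) M) (@segment_compact R (- M) M).
  apply: (subclosed_compact _ hc).
    have := (continuous_closedP _).1 (ev2_cont2 (Hess f)) _ (@closed_eq R 0).
    exact.
  move=> [a b] /= /bnd [ha hb]; split; rewrite /= in_itv /= -ler_norml //.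

- move=> [_ hneg] a b [s [[[s1|s1] [_ or]] pos]].
    exfalso; apply: or; apply: path_nonor => x y h.
    rewrite s1; change (0 < - 1 * Hf f (x, y, 0)); rewrite Hf0.
    have := nz x y (circ x y h); have := hneg x y; rewrite -/fn => h1 h2.
    have : ev2 (Hess fn) x y < 0 by rewrite lt_neqAle h2 h1.
    lra.
  by move: pos; rewrite s1 Hf1; lra.
- move=> [_ hpos] a b [s [[[s1|s1] [_ or]] pos]].
    by move: pos; rewrite s1 Hf1; lra.
  exfalso; apply: or; apply: path_nonor => x y h.
  rewrite s1; change (0 < - - 1 * Hf f (x, y, 0)); rewrite Hf0.
  have := nz x y (circ x y h); have := hpos x y; rewrite -/fn => h1 h2.
  have : 0 < ev2 (Hess fn) x y by rewrite lt_neqAle eq_sym h2 h1.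
  lra.
Qed.
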